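(* For every integer $k\ge 0$, as $n\to\infty$, \[ \left\langle\left(S_{2,n}-\frac{n}{4}\right)^k\right\rangle\sim\frac{k!}{2^{\lfloor (k+1)/2\rfloor}\,\lfloor k/2\rfloor!\,4^k}\,n^{\lfloor k/2\rfloor}. \] Equivalently, for every integer $s\ge 0$, \[ \left\langle\left(S_{2,n}-\frac{n}{4}\right)^{2s}\right\rangle\sim\frac{(2s-1)!!}{4^{2s}}n^s,\qquad \left\langle\left(S_{2,n}-\frac{n}{4}\right)^{2s+1}\right\rangle\sim\frac{(2s+1)!!}{2\cdot 4^{2s+1}}n^s. \]
   Context: For $n\ge 1$, let $\Omega_n$ be the set of rooted plane (ordered) full binary trees with $n$ leaves (every internal node has exactly two children, left and right distinguished). The random model is $\Omega_n$ with the uniform probability measure $P_n$; $\langle\cdot\rangle$ denotes expectation with respect to $P_n$. Horton–Strahler ordering: every leaf has order 1; an internal node whose two children have different orders $r_1\neq r_2$ has order $\max\{r_1,r_2\}$; an internal node whose two children both have order $r$ has order $r+1$. A branch of order $r$ is a maximal connected path consisting of nodes all of order $r$. $S_{2,n}(\tau)$ is the number of branches of order $2$ in $\tau\in\Omega_n$. For sequences, $a_n\sim b_n$ means $\lim_{n\to\infty}a_n/b_n=1$. Convention: $(-1)!!=1$. *)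

(* Defs.v *)
From Stdlib Require Import Reals Lra Lia Arith List.
From Coquelicot Require Import Coquelicot.
Import ListNotations.
Open Scope R_scope.

Inductive tree : Type :=
| Leaf : tree
| Node : tree -> tree -> tree.

Fixpoint leaves (t : tree) : nat :=
  match t with
  | Leaf => 1%nat
  | Node l r => (leaves l + leaves r)%nat
  end.

(* gen fuel n: all trees with exactly n leaves, provided fuel >= n
   (a tree with n >= 2 leaves splits as Node l r with leaves l = i,
   leaves r = n - i, 1 <= i <= n-1). *)
Fixpoint gen (fuel n : nat) : list tree :=
  match fuel with
  | O => []
  | S f =>
      match n with
      | O => []
      | S O => [Leaf]
      | _ => flat_map (fun i => flat_map (fun l => map (fun r => Node l r)
                                                   (gen f (n - i)))
                                       (gen f i))
                      (seq 1 (n - 1))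
      end
  end.

Definition Omega (n : nat) : list tree := gen n n.

Fixpoint hs_order (t : tree) : nat :=
  match t with
  | Leaf => 1%nat
  | Node l r =>
      if Nat.eqb (hs_order l) (hs_order r) then S (hs_order l)
      else Nat.max (hs_order l) (hs_order r)
  end.

(* Number of nodes of order r in t whose parent (of order p for the root of t)
   does not have order r.  Nodes of order r form disjoint vertical paths
   (an order-r node never has two order-r children), and each maximal such path
   (= branch of order r) has exactly one such top node. *)
Fixpoint branch_tops (r p : nat) (t : tree) : nat :=
  ((if (Nat.eqb (hs_order t) r && negb (Nat.eqb p r))%bool then 1 else 0) +
   match t with
   | Leaf => 0
   | Node a b => branch_tops r (hs_order t) a + branch_tops r (hs_order t) b
   end)%nat.

(* Number of branches of order r (the root has no parent: use parent order 0). *)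
Definition branches (r : nat) (t : tree) : nat := branch_tops r 0 t.

Definition S2 (t : tree) : nat := branches 2 t.

Definition expect (n : nat) (f : tree -> R) : R :=
  fold_right Rplus 0 (map f (Omega n)) / INR (length (Omega n)).

Definition asymp_equiv (a b : nat -> R) : Prop :=
  is_lim_seq (fun n => a n / b n) 1.

(* Main.v *)
Require Import Defs.
From Stdlib Require Import Reals Arith.
From Coquelicot Require Import Coquelicot.
From Stdlib Require Import Lra Lia List.
Import ListNotations.


Lemma hs_order_ge1 t : (1 <= hs_order t)%nat.
Proof. induction t; simpl; [lia|]. destruct (Nat.eqb _ _); lia. Qed.

Lemma hs_order_Node l r : (2 <= hs_order (Node l r))%nat.
Proof.
  simpl. pose proof (hs_order_ge1 l). pose proof (hs_order_ge1 r).
  destruct (Nat.eqb (hs_order l) (hs_order r)) eqn:E.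
  - lia.
  - apply Nat.eqb_neq in E. lia.
Qed.

Definition cherry (t : tree) : nat :=
  match t with Node Leaf Leaf => 1 | _ => 0 end.

Lemma bt_eq r p t : branch_tops r p t =
  ((if (Nat.eqb (hs_order t) r && negb (Nat.eqb p r))%bool then 1 else 0) +
   match t with
   | Leaf => 0
   | Node a b => branch_tops r (hs_order t) a + branch_tops r (hs_order t) b
   end)%nat.
Proof. destruct t; reflexivity. Qed.

Lemma bt_p p t : (branch_tops 2 p t + (if (Nat.eqb (hs_order t) 2 && Nat.eqb p 2)%bool then 1 else 0) = S2 t)%nat.
Proof.
  unfold S2, branches. rewrite !(bt_eq 2 _ t).
  destruct (Nat.eqb p 2); destruct (Nat.eqb (hs_order t) 2); simpl; lia.
Qed.

Lemma S2_Leaf : S2 Leaf = 0%nat.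
Proof. reflexivity. Qed.

Lemma ord1_Leaf t : hs_order t = 1%nat -> t = Leaf.
Proof. destruct t; auto. pose proof (hs_order_Node t1 t2). lia. Qed.

Lemma cherry_eq l r : cherry (Node l r) =
  (if (Nat.eqb (hs_order l) 1 && Nat.eqb (hs_order r) 1)%bool then 1 else 0)%nat.
Proof.
  destruct l as [|l1 l2]; destruct r as [|r1 r2]; simpl cherry; try reflexivity.
  - pose proof (hs_order_Node r1 r2). destruct (Nat.eqb_spec (hs_order (Node r1 r2)) 1); simpl; lia.
  - pose proof (hs_order_Node l1 l2). destruct (Nat.eqb_spec (hs_order (Node l1 l2)) 1); simpl; lia.
  - pose proof (hs_order_Node l1 l2). destruct (Nat.eqb_spec (hs_order (Node l1 l2)) 1); simpl; lia.
Qed.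

Lemma S2_Node l r : S2 (Node l r) = (S2 l + S2 r + cherry (Node l r))%nat.
Proof.
  pose proof (bt_p (hs_order (Node l r)) l) as Hl.
  pose proof (bt_p (hs_order (Node l r)) r) as Hr.
  rewrite cherry_eq.
  unfold S2 at 1, branches. rewrite bt_eq. cbv iota beta.
  change (hs_order (Node l r)) with (if Nat.eqb (hs_order l) (hs_order r) then S (hs_order l)
      else Nat.max (hs_order l) (hs_order r)) in *.
  pose proof (hs_order_ge1 l). pose proof (hs_order_ge1 r).
  revert Hl Hr.
  generalize (branch_tops 2 (if Nat.eqb (hs_order l) (hs_order r) then S (hs_order l)
      else Nat.max (hs_order l) (hs_order r)) l).
  generalize (branch_tops 2 (if Nat.eqb (hs_order l) (hs_order r) then S (hs_order l)
      else Nat.max (hs_order l) (hs_order r)) r).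
  generalize (S2 l) (S2 r).
  generalize (hs_order l) (hs_order r). intros a b x y u v Hl Hr.
  repeat match goal with
  | H : context [Nat.eqb ?x ?y] |- _ => destruct (Nat.eqb_spec x y)
  | |- context [Nat.eqb ?x ?y] => destruct (Nat.eqb_spec x y)
  end; simpl in *; lia.
Qed.

Lemma in_flat_map_ext {A B} (f g : A -> list B) (l : list A) :
  (forall x, In x l -> f x = g x) -> flat_map f l = flat_map g l.
Proof.
  induction l; simpl; intros H; auto.
  rewrite H by auto. f_equal. apply IHl. intros; apply H; auto.
Qed.

Lemma gen_fuel f1 : forall f2 n, (n <= f1)%nat -> (n <= f2)%nat -> gen f1 n = gen f2 n.
Proof.
  induction f1 as [|f1 IH]; intros f2 n H1 H2.
  - assert (n = 0%nat) by lia. subst. destruct f2; reflexivity.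
  - destruct f2 as [|f2]. { assert (n = 0%nat) by lia. subst. reflexivity. }
    destruct n as [|[|n]]; try reflexivity.
    change (gen (S f1) (S (S n))) with
     (flat_map (fun i => flat_map (fun l => map (fun r => Node l r) (gen f1 (S (S n) - i)))
                                        (gen f1 i)) (seq 1 (S (S n) - 1))).
    change (gen (S f2) (S (S n))) with
     (flat_map (fun i => flat_map (fun l => map (fun r => Node l r) (gen f2 (S (S n) - i)))
                                        (gen f2 i)) (seq 1 (S (S n) - 1))).
    apply in_flat_map_ext. intros i Hi. apply in_seq in Hi.
    rewrite (IH f2 i) by lia.
    apply in_flat_map_ext. intros l _. rewrite (IH f2 (S (S n) - i)%nat) by lia. reflexivity.
Qed.

Lemma Omega_rec n : (2 <= n)%nat ->
  Omega n = flat_map (fun i => flat_map (fun l => map (fun r => Node l r) (Omega (n - i)))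
                                        (Omega i)) (seq 1 (n - 1)).
Proof.
  intros Hn. unfold Omega. destruct n as [|[|n]]; try lia.
  change (gen (S (S n)) (S (S n))) with
   (flat_map (fun i => flat_map (fun l => map (fun r => Node l r) (gen (S n) (S (S n) - i)))
                                        (gen (S n) i)) (seq 1 (S (S n) - 1))).
  apply in_flat_map_ext. intros i Hi. apply in_seq in Hi. cbv beta.
  rewrite (gen_fuel (S n) i i) by lia.
  apply in_flat_map_ext. intros l _. rewrite (gen_fuel (S n) (S (S n) - i) (S (S n) - i)) by lia. reflexivity.
Qed.

Lemma gen_leaves f : forall n t, In t (gen f n) -> leaves t = n.
Proof.
  induction f as [|f IH]; intros n t H; [simpl in H; destruct H|].
  destruct n as [|[|n]].
  - simpl in H; destruct H.
  - simpl in H; destruct H as [<-|[]]; reflexivity.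
  - change (In t (flat_map (fun i => flat_map (fun l => map (fun r => Node l r) (gen f (S (S n) - i)))
                                        (gen f i)) (seq 1 (S (S n) - 1)))) in H.
    apply in_flat_map in H as [i [Hi H]]. apply in_seq in Hi.
    apply in_flat_map in H as [l [Hl H]]. apply in_map_iff in H as [r [<- Hr]].
    simpl. apply IH in Hl. apply IH in Hr. lia.
Qed.

Lemma Omega_leaves n t : In t (Omega n) -> leaves t = n.
Proof. apply gen_leaves. Qed.

Lemma S2_le_leaves t : (S2 t <= leaves t)%nat.
Proof.
  induction t as [|l IHl r IHr]; [rewrite S2_Leaf; simpl; lia|].
  rewrite S2_Node. change (leaves (Node l r)) with (leaves l + leaves r)%nat.
  destruct l as [|l1 l2]; destruct r as [|r1 r2]; cbn [cherry] in *; rewrite ?S2_Leaf in *;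
  cbn [leaves] in IHl, IHr |- *; lia.
Qed.

Lemma Omega_S2 n t : In t (Omega n) -> (S2 t <= n)%nat.
Proof. intros H. rewrite <- (Omega_leaves n t H). apply S2_le_leaves. Qed.

Lemma Omega1 : Omega 1 = [Leaf].
Proof. reflexivity. Qed.
Lemma Omega2 : Omega 2 = [Node Leaf Leaf].
Proof. reflexivity. Qed.
Lemma Omega0 : Omega 0 = [].
Proof. reflexivity. Qed.

Lemma cherry_Omega n i l r : (3 <= n)%nat -> In l (Omega i) -> In r (Omega (n - i)) -> (1 <= i)%nat -> (i < n)%nat ->
  cherry (Node l r) = 0%nat.
Proof.
  intros Hn Hl Hr Hi1 Hi2. apply Omega_leaves in Hl. apply Omega_leaves in Hr.
  destruct l as [|l1 l2]; destruct r as [|r1 r2]; simpl in *; try reflexivity. lia.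
Qed.

From mathcomp Require ssreflect ssrfun ssrbool eqtype ssrnat seq bigop ssralg poly ssrint ssrnum.
From mathcomp Require algebra_tactics.ring.

Module Comb.
Import ssreflect ssrfun ssrbool eqtype ssrnat seq bigop ssralg poly ssrint ssrnum algebra_tactics.ring.
Import GRing.Theory Num.Theory.
Local Open Scope ring_scope.

Definition P (n : nat) : {poly int} := \sum_(t <- Omega n) 'X^(S2 t).

Lemma big_In_ext {T : Type} (F G : T -> {poly int}) (l : list T) :
  (forall x, List.In x l -> F x = G x) -> \sum_(x <- l) F x = \sum_(x <- l) G x.
Proof.
  elim: l => [|a l IH] H; first by rewrite !big_nil.
  rewrite !big_cons H /=; last by left.
  by rewrite IH // => x Hx; apply: H; right.
Qed.

Lemma big_flat_map {A B : Type} (g : A -> list B) (F : B -> {poly int}) (l : list A) :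
  \sum_(x <- List.flat_map g l) F x = \sum_(y <- l) \sum_(x <- g y) F x.
Proof.
  elim: l => [|a l IH]; first by rewrite !big_nil.
  by rewrite /= big_cat big_cons IH.
Qed.

Lemma big_list_map {A B : Type} (g : A -> B) (F : B -> {poly int}) (l : list A) :
  \sum_(x <- List.map g l) F x = \sum_(y <- l) F (g y).
Proof.
  elim: l => [|a l IH]; first by rewrite !big_nil.
  by rewrite /= !big_cons IH.
Qed.

Lemma listseq_iota a n : List.seq a n = iota a n.
Proof. by elim: n a => [|n IH] a //=; rewrite IH. Qed.

Lemma P_conv n : (3 <= n)%N -> P n = \sum_(1 <= i < n) P i * P (n - i).
Proof.
  move=> Hn. rewrite /P Omega_rec; last by apply/leP; apply: leq_trans Hn.
  rewrite big_flat_map.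
  have -> : index_iota 1 n = List.seq 1 (n - 1) by rewrite listseq_iota.
  apply: big_In_ext => i /List.in_seq Hi.
  rewrite big_flat_map big_distrl /=.
  apply: big_In_ext => l Hl.
  rewrite big_list_map big_distrr /=.
  apply: big_In_ext => r Hr.
  have H3 : (3 <= n)%coq_nat by apply/leP.
  have H1 : (1 <= i)%coq_nat by lia.
  have H2 : (i < n)%coq_nat by lia.
  rewrite S2_Node (cherry_Omega n i l r H3 Hl Hr H1 H2).
  by rewrite Nat.add_0_r -exprD.
Qed.


Lemma P1 : P 1 = 1.
Proof. by rewrite /P Omega1 big_cons big_nil S2_Leaf expr0 addr0. Qed.

Lemma P2 : P 2 = 'X.
Proof.
  rewrite /P Omega2 big_cons big_nil addr0.
  have -> : S2 (Node Leaf Leaf) = 1%N by reflexivity.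
  by rewrite expr1.
Qed.

Definition G (n : nat) : {poly int} := if n is 0 then 1 else - (P n *+ 2).

Definition u : {poly int} := 'X - 1.

Definition Dl (n : nat) : {poly int} :=
  match n with 0 => 1 | 1 => -4 | 2 => -4 * u | _ => 0 end.

Lemma G_conv n : \sum_(0 <= i < n.+1) G i * G (n - i) = Dl n.
Proof.
  case: n => [|m]; first by rewrite big_nat1 /G mulr1.
  rewrite big_nat_recl // big_nat_recr //= subn0 subnn.
  have -> : \sum_(0 <= i < m) G i.+1 * G (m.+1 - i.+1) =
            (\sum_(0 <= i < m) P i.+1 * P (m - i)) *+ 4.
    rewrite -sumrMnl. apply: eq_big_nat => i /andP [_ Hi].
    rewrite subSS /G.
    case E: (m - i)%N => [|k]; first by move: Hi; rewrite -subn_gt0 E.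
    by rewrite mulrNN mulrnAl mulrnAr -mulrnA.
  case: m => [|[|m]].
  - by rewrite big_nil /G P1 mul1r mulr1; ring.
  - by rewrite big_nat1 /G /= P1 P2 mul1r mulr1 /u; ring.
  - have -> : \sum_(0 <= i < m.+2) P i.+1 * P (m.+2 - i) = P m.+3.
      by rewrite (P_conv m.+3) // big_add1 /=.
    rewrite /G /=. set p := P m.+3. ring.
Qed.


Lemma twice0 (x : {poly int}) : x *+ 2 = 0 -> x = 0.
Proof.
  move=> H; apply/polyP => i; move: (congr1 (fun p : {poly int} => p`_i) H).
  by rewrite coefMn !coef0 => /eqP; rewrite mulrn_eq0 /= => /eqP.
Qed.

Definition c (N i : nat) : {poly int} := G i * G (N - i).

Definition W (N : nat) : {poly int} := \sum_(0 <= i < N.+1) (N - i)%:R * c N i.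

Lemma W_eq N : W N *+ 2 = N%:R * Dl N.
Proof.
  rewrite /W -G_conv mulr_sumr mulr2n.
  have E : \sum_(0 <= i < N.+1) (N - i)%:R * c N i = \sum_(0 <= i < N.+1) i%:R * c N i.
    rewrite big_nat_rev. apply: eq_big_nat => i /andP [_ Hi].
    rewrite add0n subSS subKn; last by rewrite -ltnS.
    rewrite /c subKn; last by rewrite -ltnS.
    by rewrite [G (N - i) * _]mulrC.
  rewrite {2}E. transitivity (\sum_(0 <= i < N.+1) ((N - i)%:R * c N i + i%:R * c N i)).
    by rewrite big_split.
  apply: eq_big_nat => i /andP [_ Hi].
  rewrite /c -mulrDl -natrD subnK //; by rewrite -ltnS.
Qed.

Definition H (n : nat) : {poly int} :=
  (n.+1)%:R * G n.+1 - (4 * n%:R - 2) * G n -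
  (if n is n'.+1 then 4 * u * (n%:R - 2) * G n' else 0).

Lemma key n : \sum_(0 <= i < n.+1) G i * H (n - i) = 0.
Proof.
  case: n => [|m].
    rewrite big_nat1 subnn /H /G P1 /=. ring.
  have E : \sum_(0 <= i < m.+2) G i * H (m.+1 - i) =
     W m.+2 - (W m.+1 *+ 4 - Dl m.+1 *+ 2) - 4 * u * (W m - Dl m).
    have -> : W m.+2 = \sum_(0 <= i < m.+2) (m.+2 - i)%:R * c m.+2 i.
      by rewrite /W big_nat_recr //= subnn mul0r addr0.
    have -> : W m.+1 *+ 4 - Dl m.+1 *+ 2 =
              \sum_(0 <= i < m.+2) (4 * (m.+1 - i)%:R - 2) * c m.+1 i.
      rewrite /W -G_conv -!sumrMnl -sumrB. apply: eq_big_nat => i _.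
      rewrite /c. ring.
    have -> : 4 * u * (W m - Dl m) =
              \sum_(0 <= i < m.+2) (if (i <= m)%N then 4 * u * ((m - i)%:R - 1) * c m i else 0).
      rewrite big_nat_recr //= ltnn addr0 /W -G_conv -sumrB mulr_sumr.
      apply: eq_big_nat => i /andP [_ Hi]. rewrite -ltnS Hi /c. ring.
    rewrite -!sumrB. apply: eq_big_nat => i /andP [_ Hi].
    rewrite /H /c.
    have E2 : ((m.+1 - i).+1 = m.+2 - i)%N by rewrite [RHS]subSn.
    rewrite E2.
    move: Hi; rewrite ltnS leq_eqVlt => /orP [/eqP ->|Hi].
      rewrite subnn ltnn. ring.
    have Hi' : (i <= m)%N by rewrite -ltnS.
    rewrite Hi' (subSn Hi'). set k := (m - i)%N. cbv iota.
    have -> : (k.+1)%:R = k%:R + 1 :> {poly int} by rewrite -addn1 natrD.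
    ring.
  rewrite E. apply: twice0.
  have -> : (W m.+2 - (W m.+1 *+ 4 - Dl m.+1 *+ 2) - 4 * u * (W m - Dl m)) *+ 2 =
     W m.+2 *+ 2 - (W m.+1 *+ 2) *+ 4 + Dl m.+1 *+ 4 - 4 * u * (W m *+ 2 - Dl m *+ 2) by ring.
  rewrite !W_eq.
  case: m {E} => [|[|[|m]]]; rewrite /Dl; ring.
Qed.


Lemma H0 n : H n = 0.
Proof.
  elim/ltn_ind: n => n IH.
  have Z : \sum_(0 <= i < n) G i.+1 * H (n - i.+1) = 0.
    rewrite big_nat_cond big1 // => i /andP [/andP [_ Hi] _].
    rewrite IH ?mulr0 // ltn_subrL /=. by apply: leq_ltn_trans Hi.
  move: (key n). by rewrite big_nat_recl // Z addr0 subn0 mul1r.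
Qed.

Lemma P_rec m : (m.+3)%:R * P m.+3 = (4 * (m.+2)%:R - 2) * P m.+2 + 4 * u * m%:R * P m.+1.
Proof.
  have E : - (((m.+3)%:R * P m.+3 - ((4 * (m.+2)%:R - 2) * P m.+2 + 4 * u * m%:R * P m.+1)) *+ 2) = 0.
    rewrite -(H0 m.+2) /H /G.
    have -> : (m.+2)%:R = m%:R + 2 :> {poly int} by rewrite -addn2 natrD.
    ring.
  move/eqP: E; rewrite oppr_eq0 => /eqP/twice0/eqP; rewrite subr_eq0 => /eqP.
  done.
Qed.

Definition cnt_l (l : list tree) (k : nat) : nat := count (fun t => S2 t == k) l.

Lemma cnt_nil k : cnt_l nil k = 0%N.
Proof. by []. Qed.

Lemma cnt_cons a l k : cnt_l (a :: l) k = ((if Nat.eqb (S2 a) k then 1%N else 0%N) + cnt_l l k)%coq_nat.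
Proof.
  rewrite /cnt_l /=. case: (Nat.eqb_spec (S2 a) k) => [->|/eqP H]; first by rewrite eqxx.
  by rewrite (negbTE H).
Qed.

Lemma coefP n k : (P n)`_k = (cnt_l (Omega n) k)%:R.
Proof.
  rewrite /P coef_sum /cnt_l. elim: (Omega n) => [|a l IH]; first by rewrite big_nil.
  by rewrite big_cons IH coefXn /= natrD eq_sym.
Qed.

Lemma cnt_rec m0 k :
  ((m0.+3) * cnt_l (Omega m0.+3) k + 4 * m0 * cnt_l (Omega m0.+1) k =
   (4 * m0.+2 - 2) * cnt_l (Omega m0.+2) k +
   4 * m0 * (if k is k'.+1 then cnt_l (Omega m0.+1) k' else 0))%N.
Proof.
  have E : (m0.+3)%:R * P m0.+3 + ((4 * m0)%N)%:R * P m0.+1 =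
           ((4 * m0.+2 - 2)%N)%:R * P m0.+2 + ((4 * m0)%N)%:R * ('X * P m0.+1).
    have H2 : (2 <= 4 * m0.+2)%N by rewrite mulnS.
    rewrite (natrB _ H2).
    rewrite !natrM P_rec /u. ring.
  move: E. move: (m0.+3) (4 * m0)%N (4 * m0.+2 - 2)%N => N3 N0 N4.
  rewrite !mulr_natl => E.
  move: (congr1 (fun p : {poly int} => p`_k) E).
  rewrite !coefD !coefMn coefXM !coefP.
  case: k => [|k] /=.
    rewrite mul0rn addr0 -!mulrnA -natrD => /eqP; rewrite eqr_nat => /eqP.
    by rewrite muln0 addn0 ![(_ * cnt_l _ _)%N]mulnC.
  - rewrite -!mulrnA -!natrD => /eqP; rewrite eqr_nat => /eqP.
    by rewrite ![(_ * cnt_l _ _)%N]mulnC.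
Qed.

End Comb.

Open Scope R_scope.

Definition Sm (n : nat) (f : nat -> R) : R :=
  fold_right Rplus 0 (map (fun t => f (S2 t)) (Omega n)).

Definition cL (l : list tree) (m : nat) : nat := Comb.cnt_l l m.

Lemma sum_ind_pt (s B : nat) (f : nat -> R) : (s <= B)%nat ->
  sum_f_R0 (fun m => INR (if Nat.eqb s m then 1 else 0) * f m) B = f s.
Proof.
  induction B as [|B IH]; intros H.
  - assert (s = 0%nat) by lia. subst. simpl. ring.
  - simpl. destruct (Nat.eqb_spec s (S B)) as [E|E].
    + subst. rewrite sum_eq_R0. simpl; ring.
      intros m Hm. destruct (Nat.eqb_spec (S B) m); [lia|]. simpl; ring.
    + rewrite IH by lia. simpl; ring.
Qed.

Lemma fold_cnt (l : list tree) (B : nat) (f : nat -> R) :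
  (forall t, In t l -> (S2 t <= B)%nat) ->
  fold_right Rplus 0 (map (fun t => f (S2 t)) l) =
  sum_f_R0 (fun m => INR (Comb.cnt_l l m) * f m) B.
Proof.
  induction l as [|a l IH]; intros H.
  - simpl. rewrite sum_eq_R0; auto. intros m _. try rewrite Comb.cnt_nil. simpl; ring.
  - cbn [map fold_right]. rewrite IH by (intros; apply H; simpl; auto).
    rewrite <- (sum_ind_pt (S2 a) B f) by (apply H; simpl; auto).
    rewrite <- plus_sum. apply sum_eq. intros m _.
    rewrite Comb.cnt_cons, plus_INR. ring.
Qed.

Lemma Sm_cnt n B f : (n <= B)%nat ->
  Sm n f = sum_f_R0 (fun m => INR (Comb.cnt_l (Omega n) m) * f m) B.
Proof.
  intros H. apply fold_cnt. intros t Ht. apply Omega_S2 in Ht. lia.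
Qed.

Lemma cnt_rec' m0 k :
  ((m0 + 3) * Comb.cnt_l (Omega (m0 + 3)) k + 4 * m0 * Comb.cnt_l (Omega (m0 + 1)) k =
   (4 * (m0 + 2) - 2) * Comb.cnt_l (Omega (m0 + 2)) k +
   4 * m0 * (match k with 0 => 0 | S k' => Comb.cnt_l (Omega (m0 + 1)) k' end))%nat.
Proof.
  replace (m0 + 3)%nat with (S (S (S m0))) by lia.
  replace (m0 + 2)%nat with (S (S m0)) by lia.
  replace (m0 + 1)%nat with (S m0) by lia.
  exact (Comb.cnt_rec m0 k).
Qed.

Lemma Sm_rec n f : (2 <= n)%nat ->
  INR (n + 1) * Sm (n + 1) f + 4 * (INR n - 2) * Sm (n - 1) f =
  (4 * INR n - 2) * Sm n f + 4 * (INR n - 2) * Sm (n - 1) (fun m => f (S m)).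
Proof.
  intros Hn. set (m0 := (n - 2)%nat).
  assert (En : n = (m0 + 2)%nat) by lia. clearbody m0. subst n.
  replace (m0 + 2 + 1)%nat with (m0 + 3)%nat by lia.
  replace (m0 + 2 - 1)%nat with (m0 + 1)%nat by lia.
  rewrite (Sm_cnt (m0 + 3) (m0 + 3)) by lia.
  rewrite (Sm_cnt (m0 + 1) (m0 + 3)) by lia.
  rewrite (Sm_cnt (m0 + 2) (m0 + 3)) by lia.
  rewrite (Sm_cnt (m0 + 1) (m0 + 2)) by lia.
  replace (sum_f_R0 (fun m => INR (Comb.cnt_l (Omega (m0 + 1)) m) * f (S m)) (m0 + 2))
    with (sum_f_R0 (fun m => INR (match m with 0 => 0 | S k' => Comb.cnt_l (Omega (m0 + 1)) k' end)%nat * f m) (m0 + 3)).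
  2:{ rewrite decomp_sum by lia. simpl (INR 0). rewrite Rmult_0_l, Rplus_0_l.
      replace (Init.Nat.pred (m0 + 3)) with (m0 + 2)%nat by lia. reflexivity. }
  rewrite !scal_sum. rewrite <- !plus_sum. apply sum_eq. intros m _.
  pose proof (cnt_rec' m0 m) as E. apply (f_equal INR) in E.
  rewrite !plus_INR, !mult_INR, minus_INR, !mult_INR, !plus_INR in E by lia.
  rewrite !plus_INR. simpl (INR 2) in *. simpl (INR 3) in *. simpl (INR 4) in *. simpl (INR 1) in *.
  set (X3 := INR (Comb.cnt_l (Omega (m0 + 3)) m)) in *.
  set (X1 := INR (Comb.cnt_l (Omega (m0 + 1)) m)) in *.
  set (X2 := INR (Comb.cnt_l (Omega (m0 + 2)) m)) in *.
  set (Y := INR match m with 0 => 0%nat | S k' => Comb.cnt_l (Omega (m0 + 1)) k' end) in *.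
  set (M := INR m0) in *.
  assert (E' : X3 * (M + 3) + X1 * (4 * M) - (X2 * (4 * M + 6) + Y * (4 * M)) = 0) by nra.
  apply Rminus_diag_uniq.
  transitivity (f m * (X3 * (M + 3) + X1 * (4 * M) - (X2 * (4 * M + 6) + Y * (4 * M)))).
  { ring. }
  rewrite E'. ring.
Qed.

Definition cc (n : nat) : R := INR (length (Omega n)).

Lemma fold_ones (l : list tree) : fold_right Rplus 0 (map (fun _ => 1) l) = INR (length l).
Proof. induction l; simpl; [reflexivity|]. rewrite IHl. destruct (length l); simpl; ring. Qed.

Lemma Sm_one n : Sm n (fun _ => 1) = cc n.
Proof. apply fold_ones. Qed.

Lemma cc_rec n : (2 <= n)%nat -> INR (n + 1) * cc (n + 1) = (4 * INR n - 2) * cc n.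
Proof.
  intros H. pose proof (Sm_rec n (fun _ => 1) H) as E. rewrite !Sm_one in E. lra.
Qed.

Lemma cc1 : cc 1 = 1. Proof. reflexivity. Qed.
Lemma cc2 : cc 2 = 1. Proof. reflexivity. Qed.

Lemma cc_pos n : (1 <= n)%nat -> 0 < cc n.
Proof.
  induction n as [|n IH]; intros H; [lia|].
  destruct n as [|[|n]].
  - rewrite cc1; lra.
  - rewrite cc2; lra.
  - pose proof (cc_rec (S (S n)) ltac:(lia)) as E.
    replace (S (S n) + 1)%nat with (S (S (S n))) in E by lia.
    assert (0 < cc (S (S n))) by (apply IH; lia).
    assert (0 < INR (S (S (S n)))) by (apply lt_0_INR; lia).
    assert (2 <= INR (S (S n))) by (replace 2 with (INR 2) by (simpl; ring); apply le_INR; lia).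
    apply (Rmult_lt_reg_l (INR (S (S (S n))))); auto. rewrite E. rewrite Rmult_0_r.
    apply Rmult_lt_0_compat; lra.
Qed.

Lemma fold_lin (l : list tree) (f g : nat -> R) (a b : R) :
  fold_right Rplus 0 (map (fun t => a * f (S2 t) + b * g (S2 t)) l) =
  a * fold_right Rplus 0 (map (fun t => f (S2 t)) l) + b * fold_right Rplus 0 (map (fun t => g (S2 t)) l).
Proof. induction l; simpl; [ring|]. rewrite IHl. ring. Qed.

Lemma Sm_lin n f g a b : Sm n (fun m => a * f m + b * g m) = a * Sm n f + b * Sm n g.
Proof. apply fold_lin. Qed.

Lemma Sm_ext n f g : (forall m, f m = g m) -> Sm n f = Sm n g.
Proof. intros H. unfold Sm. f_equal. apply map_ext. intros; apply H. Qed.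

Lemma Sm_sum n (g : nat -> nat -> R) K :
  Sm n (fun m => sum_f_R0 (fun i => g i m) K) = sum_f_R0 (fun i => Sm n (g i)) K.
Proof.
  induction K as [|K IH]; simpl.
  - reflexivity.
  - rewrite <- IH. rewrite <- (Rmult_1_l (Sm n (fun m => sum_f_R0 (fun i => g i m) K))).
    rewrite <- (Rmult_1_l (Sm n (g (S K)))). rewrite <- Sm_lin. apply Sm_ext. intros; ring.
Qed.

Definition E (n : nat) (f : nat -> R) : R := Sm n f / cc n.

Lemma E_ext n f g : (forall m, f m = g m) -> E n f = E n g.
Proof. intros H. unfold E. rewrite (Sm_ext n f g H). reflexivity. Qed.

Lemma E_lin n f g a b : E n (fun m => a * f m + b * g m) = a * E n f + b * E n g.
Proof. unfold E. rewrite Sm_lin. unfold Rdiv. ring. Qed.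

Lemma E_scal n f a : E n (fun m => a * f m) = a * E n f.
Proof.
  unfold E. replace (Sm n (fun m => a * f m)) with (a * Sm n f + 0 * Sm n f).
  - unfold Rdiv; ring.
  - rewrite <- Sm_lin. apply Sm_ext; intros; ring.
Qed.

Lemma E_sum n (g : nat -> nat -> R) K :
  E n (fun m => sum_f_R0 (fun i => g i m) K) = sum_f_R0 (fun i => E n (g i)) K.
Proof.
  unfold E. rewrite Sm_sum. unfold Rdiv. rewrite Rmult_comm, scal_sum. reflexivity.
Qed.

Lemma E_one n : (1 <= n)%nat -> E n (fun _ => 1) = 1.
Proof. intros H. unfold E. rewrite Sm_one. pose proof (cc_pos n H). field. lra. Qed.

Definition rr (n : nat) : R := INR n * (INR n - 2) / ((2 * INR n - 3) * (2 * INR n - 1)).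

Lemma cc_rec2 n : (2 <= n)%nat -> INR n * cc n = (4 * INR n - 6) * cc (n - 1).
Proof.
  intros H. destruct n as [|[|[|n]]]; try lia.
  - change (2 - 1)%nat with 1%nat. rewrite cc2, cc1. simpl. ring.
  - pose proof (cc_rec (S (S n)) ltac:(lia)) as E0.
    replace (S (S n) + 1)%nat with (S (S (S n))) in E0 by lia.
    replace (S (S (S n)) - 1)%nat with (S (S n)) by lia.
    rewrite E0. rewrite !S_INR. ring.
Qed.

Lemma E_rec n f : (2 <= n)%nat ->
  E (n + 1) f = E n f + rr n * E (n - 1) (fun m => f (S m) - f m).
Proof.
  intros H. unfold E.
  pose proof (Sm_rec n f H) as E0.
  pose proof (cc_rec n H) as E1. pose proof (cc_rec2 n H) as E2.
  assert (Hc : 0 < cc n) by (apply cc_pos; lia).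
  assert (Hc1 : 0 < cc (n - 1)) by (apply cc_pos; lia).
  assert (Hc2 : 0 < cc (n + 1)) by (apply cc_pos; lia).
  assert (Hn : 2 <= INR n) by (replace 2 with (INR 2) by (simpl; ring); apply le_INR; lia).
  rewrite plus_INR in E0, E1. simpl (INR 1) in E0, E1.
  assert (Ed : Sm (n - 1) (fun m => f (S m) - f m) = Sm (n - 1) (fun m => f (S m)) - Sm (n - 1) f).
  { replace (Sm (n-1) (fun m => f (S m)) - Sm (n-1) f) with
      (1 * Sm (n-1) (fun m => f (S m)) + (-1) * Sm (n-1) f) by ring.
    rewrite <- Sm_lin. apply Sm_ext; intros; ring. }
  rewrite Ed. unfold rr.
  apply (Rmult_eq_reg_l ((INR n + 1) * cc (n + 1))).
  2:{ apply Rgt_not_eq. apply Rmult_lt_0_compat; lra. }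
  transitivity ((INR n + 1) * Sm (n + 1) f).
  { field. lra. }
  assert (Ec : cc (n + 1) = (4 * INR n - 2) * cc n / (INR n + 1)).
  { apply (Rmult_eq_reg_l (INR n + 1)); [|lra]. rewrite E1. field. lra. }
  assert (Ec' : cc n = (4 * INR n - 6) * cc (n - 1) / INR n).
  { apply (Rmult_eq_reg_l (INR n)); [|lra]. rewrite E2. field. lra. }
  replace ((INR n + 1) * Sm (n + 1) f) with
    ((4 * INR n - 2) * Sm n f + 4 * (INR n - 2) * (Sm (n - 1) (fun m : nat => f (S m)) - Sm (n - 1) f)) by lra.
  rewrite Ec. rewrite Ec'. field.
  repeat split; try lra.
Qed.

Definition mu (n k : nat) : R := E n (fun m => (INR m - INR n / 4) ^ k).
Definition dd (j : nat) : R := (1/2) ^ j - (-1/2) ^ j.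

Lemma E_binom n (x : nat -> R) (y : R) k :
  E n (fun m => (x m + y) ^ k) = sum_f_R0 (fun i => Binomial.C k i * y ^ (k - i) * E n (fun m => x m ^ i)) k.
Proof.
  rewrite (E_ext n _ (fun m => sum_f_R0 (fun i => (Binomial.C k i * y ^ (k - i)) * x m ^ i) k)).
  - rewrite E_sum. apply sum_eq. intros i _. apply E_scal.
  - intros m. rewrite binomial. apply sum_eq. intros i _. ring.
Qed.

Lemma mu_rec n k : (2 <= n)%nat ->
  mu (n + 1) k = sum_f_R0 (fun i => Binomial.C k i * (-1/4) ^ (k - i) * mu n i) k +
                 rr n * sum_f_R0 (fun i => Binomial.C k i * dd (k - i) * mu (n - 1) i) k.
Proof.
  intros H. unfold mu at 1. rewrite E_rec by auto. f_equal.
  - rewrite (E_ext n _ (fun m => ((INR m - INR n / 4) + (-1/4)) ^ k)).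
    + rewrite E_binom. reflexivity.
    + intros m. rewrite plus_INR. simpl (INR 1). f_equal. field.
  - f_equal.
    rewrite (E_ext (n - 1) _ (fun m => ((INR m - INR (n - 1) / 4) + (1/2)) ^ k
                                  - ((INR m - INR (n - 1) / 4) + (-1/2)) ^ k)).
    + unfold Rminus at 1.
      replace (E (n - 1) (fun m => (INR m - INR (n - 1) / 4 + 1 / 2) ^ k + - (INR m - INR (n - 1) / 4 + -1 / 2) ^ k))
        with (1 * E (n - 1) (fun m => (INR m - INR (n - 1) / 4 + 1 / 2) ^ k) +
              (-1) * E (n - 1) (fun m => (INR m - INR (n - 1) / 4 + -1 / 2) ^ k)).
      2:{ rewrite <- E_lin. apply E_ext; intros; ring. }
      rewrite !E_binom.
      match goal with |- 1 * ?a + -1 * ?b = _ => transitivity (a - b); [ring|] end.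
      symmetry. apply tech11. intros i. unfold mu, dd. ring.
    + intros m. rewrite minus_INR by lia. rewrite plus_INR, S_INR. simpl (INR 1).
      f_equal; f_equal; field.
Qed.

Definition D (n k : nat) : R := mu (S n) k - mu n k.
Definition ee (j : nat) : R := (-1/4) ^ j + dd j / 4.

Lemma mu0 n : (1 <= n)%nat -> mu n 0 = 1.
Proof. intros H. unfold mu. simpl. apply E_one; auto. Qed.

Lemma Dform n k' : (1 <= n)%nat ->
  D (S n) (S k') = sum_f_R0 (fun i => Binomial.C (S k') i *
     (ee (S k' - i) * mu n i + (rr (S n) - 1/4) * dd (S k' - i) * mu n i
      + (-1/4) ^ (S k' - i) * D n i)) k'.
Proof.
  intros H. unfold D at 1.
  pose proof (mu_rec (S n) (S k') ltac:(lia)) as E0.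
  replace (S n + 1)%nat with (S (S n)) in E0 by lia.
  replace (S n - 1)%nat with n in E0 by lia.
  rewrite E0. rewrite !tech5. rewrite C_n_n, Nat.sub_diag.
  unfold dd at 2. rewrite !pow_O.
  match goal with |- ?a + _ + ?r * (?c + _) - _ = _ =>
    transitivity (a + r * c) end.
  { ring. }
  rewrite scal_sum, <- plus_sum. apply sum_eq. intros i Hi.
  unfold D, ee. set (p := (-1 / 4) ^ (S k' - i)). set (C0 := Binomial.C (S k') i). set (q := dd (S k' - i)). set (r := rr (S n)). set (m1 := mu n i). set (m2 := mu (S n) i). clearbody p C0 q r m1 m2. field.
Qed.

Lemma rr_eq n : rr (S n) - 1/4 = -3 / (16 * INR n ^ 2 - 4).
Proof.
  unfold rr. rewrite S_INR. destruct n as [|n].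
  - simpl. field.
  - assert (1 <= INR (S n)) by (replace 1 with (INR 1) by reflexivity; apply le_INR; lia).
    field. repeat split; nra.
Qed.

Lemma mu2_1 : mu 2 1 = 1/2.
Proof.
  unfold mu, E, Sm. rewrite cc2, Omega2. simpl map. simpl fold_right.
  change (S2 (Node Leaf Leaf)) with 1%nat. simpl. field.
Qed.

Lemma mu1 n : (2 <= n)%nat -> mu n 1 = INR n / (4 * (2 * INR n - 3)).
Proof.
  induction n as [|n IH]; intros H; [lia|].
  destruct (Nat.eq_dec n 1) as [->|Hn].
  - rewrite mu2_1. simpl. field.
  - assert (H2 : (2 <= n)%nat) by lia.
    replace (S n) with (n + 1)%nat by lia.
    rewrite mu_rec by auto. simpl sum_f_R0.
    rewrite C_n_0, C_n_n. rewrite !mu0 by lia. rewrite IH by auto.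
    unfold rr, dd. simpl pow. rewrite plus_INR. simpl (INR 1).
    assert (2 <= INR n) by (replace 2 with (INR 2) by (simpl; ring); apply le_INR; lia).
    field. repeat split; lra.
Qed.

Lemma lim_sum (N : nat) (u : nat -> nat -> R) (l : nat -> R) :
  (forall i, (i <= N)%nat -> is_lim_seq (u i) (l i)) ->
  is_lim_seq (fun n => sum_f_R0 (fun i => u i n) N) (sum_f_R0 l N).
Proof.
  induction N as [|N IH]; intros H; simpl.
  - apply H; lia.
  - apply is_lim_seq_plus'. apply IH; intros; apply H; lia. apply H; lia.
Qed.

Lemma lim_scal (u : nat -> R) (a l : R) : is_lim_seq u l -> is_lim_seq (fun n => a * u n) (a * l).
Proof. intros H. apply is_lim_seq_mult'. apply is_lim_seq_const. auto. Qed.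

Lemma sum_last_only (f : nat -> R) N : (forall i, (i < N)%nat -> f i = 0) -> sum_f_R0 f N = f N.
Proof.
  destruct N as [|N]; intros H; [reflexivity|].
  rewrite tech5. rewrite sum_eq_R0. ring. intros; apply H; lia.
Qed.

Lemma lim_inv_n : is_lim_seq (fun n => / INR n) 0.
Proof.
  replace (Finite 0) with (Rbar_inv p_infty) by reflexivity.
  apply is_lim_seq_inv. apply is_lim_seq_INR. discriminate.
Qed.

Lemma lim_invpow j : is_lim_seq (fun n => / INR n ^ j) (Finite (if Nat.eqb j 0 then 1 else 0)).
Proof.
  induction j as [|j IH].
  - simpl. eapply is_lim_seq_ext; [|apply is_lim_seq_const]. intros; simpl; field.
  - simpl Nat.eqb.
    apply (is_lim_seq_ext (fun n => / INR n * / INR n ^ j)).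
    { intros n. simpl pow. rewrite Rinv_mult. reflexivity. }
    replace (Finite 0) with (Finite (0 * (if Nat.eqb j 0 then 1 else 0))) by (f_equal; ring).
    apply is_lim_seq_mult'. apply lim_inv_n. apply IH.
Qed.

Lemma ev1 (P : nat -> Prop) : (forall n, (1 <= n)%nat -> P n) -> eventually P.
Proof. intros H. exists 1%nat. auto. Qed.

Lemma INR_pos1 n : (1 <= n)%nat -> 0 < INR n.
Proof. intros; apply lt_0_INR; lia. Qed.

Lemma powratio p q : (p <= q)%nat ->
  is_lim_seq (fun n => INR n ^ p / INR n ^ q) (Finite (if Nat.eqb p q then 1 else 0)).
Proof.
  intros H. replace (Nat.eqb p q) with (Nat.eqb (q - p) 0).
  2:{ destruct (Nat.eqb_spec (q-p) 0); destruct (Nat.eqb_spec p q); auto; lia. }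
  apply (is_lim_seq_ext_loc (fun n => / INR n ^ (q - p))).
  2: apply lim_invpow.
  apply ev1. intros n Hn. pose proof (INR_pos1 n Hn).
  replace q with (p + (q - p))%nat at 2 by lia. rewrite pow_add.
  field. split; apply pow_nonzero; lra.
Qed.

Lemma C_pred h : Binomial.C (S h) h = INR (S h).
Proof.
  unfold Binomial.C. replace (S h - h)%nat with 1%nat by lia.
  change (fact (S h)) with (S h * fact h)%nat. rewrite mult_INR. simpl (fact 1).
  pose proof (INR_fact_neq_0 h). simpl (INR 1). field. auto.
Qed.

Lemma lim_dpow h : (1 <= h)%nat ->
  is_lim_seq (fun n => (INR (S n) ^ h - INR n ^ h) * INR n / INR n ^ h) (INR h).
Proof.
  intros Hh. destruct h as [|h']; [lia|].
  replace (Finite (INR (S h'))) with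
    (Finite (sum_f_R0 (fun i => Binomial.C (S h') i * (if Nat.eqb (S i) (S h') then 1 else 0)) h')).
  2:{ f_equal. rewrite sum_last_only.
      - rewrite Nat.eqb_refl, Rmult_1_r. apply C_pred.
      - intros i Hi. destruct (Nat.eqb_spec (S i) (S h')); [lia|]. ring. }
  eapply is_lim_seq_ext_loc.
  2:{ apply (lim_sum h' (fun i n => Binomial.C (S h') i * (INR n ^ S i / INR n ^ S h'))
           (fun i => Binomial.C (S h') i * (if Nat.eqb (S i) (S h') then 1 else 0))).
      intros i Hi. apply lim_scal. apply powratio. lia. }
  - apply ev1. intros n Hn. pose proof (INR_pos1 n Hn).
    rewrite S_INR, binomial. rewrite tech5, C_n_n, Nat.sub_diag, pow_O.
    replace (sum_f_R0 (fun i => Binomial.C (S h') i * INR n ^ i * 1 ^ (S h' - i)) h' +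
             1 * INR n ^ S h' * 1 - INR n ^ S h')
      with (sum_f_R0 (fun i => Binomial.C (S h') i * INR n ^ i) h').
    2:{ rewrite Rmult_1_l, Rmult_1_r. unfold Rminus. rewrite Rplus_assoc, Rplus_opp_r, Rplus_0_r.
        apply sum_eq. intros i _. rewrite pow1. ring. }
    unfold Rdiv. rewrite Rmult_assoc. rewrite (Rmult_comm (sum_f_R0 _ _)). rewrite scal_sum.
    apply sum_eq. intros i _. simpl pow. field. split; [apply pow_nonzero|]; lra.
Qed.

Lemma telesc (y : nat -> R) n : sum_f_R0 (fun k => y (S k) - y k) n = y (S n) - y 0%nat.
Proof. induction n as [|n IH]; simpl; [ring|]. rewrite IH. ring. Qed.

Lemma stolz (x y : nat -> R) (a : R) :
  (forall n, y n < y (S n)) -> is_lim_seq y p_infty ->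
  is_lim_seq (fun n => (x (S n) - x n) / (y (S n) - y n)) a ->
  is_lim_seq (fun n => x n / y n) a.
Proof.
  intros Hinc Hy Hq.
  set (An := fun n => y (S n) - y n).
  set (Bn := fun n => (x (S n) - x n) / (y (S n) - y n)).
  assert (HA : forall n, 0 < An n) by (intros; unfold An; specialize (Hinc n); lra).
  assert (Hs : is_lim_seq (fun n => y (S n) - y 0%nat) p_infty).
  { apply is_lim_seq_incr_1 in Hy.
    eapply is_lim_seq_plus. apply Hy. apply is_lim_seq_const. simpl. constructor. }
  pose proof (Cesaro An Bn a) as C0.
  assert (Hc : is_lim_seq (fun n => (x (S n) - x 0%nat) / (y (S n) - y 0%nat)) a).
  { apply is_lim_seq_Reals.
    eapply Un_cv_ext; [|apply C0].
    - intros n. simpl. rewrite <- (telesc x n), <- (telesc y n). f_equal.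
      apply sum_eq. intros i _. unfold An, Bn. field. specialize (HA i). unfold An in HA. lra.
    - apply is_lim_seq_Reals. apply Hq.
    - exact HA.
    - apply is_lim_seq_p_infty_Reals. eapply is_lim_seq_ext; [|apply Hs].
      intros n. symmetry. apply (telesc y n). }
  assert (Hi : is_lim_seq (fun n => / y (S n)) 0).
  { replace (Finite 0) with (Rbar_inv p_infty) by reflexivity.
    apply is_lim_seq_inv. apply is_lim_seq_incr_1 in Hy. exact Hy. discriminate. }
  apply is_lim_seq_incr_1.
  apply is_lim_seq_spec in Hy. destruct (Hy (Rabs (y 0%nat) + 1)) as [N HN].
  apply (is_lim_seq_ext_loc (fun n => (x (S n) - x 0%nat) / (y (S n) - y 0%nat) * (1 - y 0%nat * / y (S n)) + x 0%nat * / y (S n))).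
  - exists N. intros n Hn. assert (Hyn : Rabs (y 0%nat) + 1 < y (S n)) by (apply HN; lia).
    pose proof (Rle_abs (y 0%nat)).
    pose proof (Rabs_pos (y 0%nat)). field. split; lra.
  - replace (Finite a) with (Finite (a * (1 - y 0%nat * 0) + x 0%nat * 0)) by (f_equal; ring).
    apply is_lim_seq_plus'. apply is_lim_seq_mult'. exact Hc.
    apply is_lim_seq_minus'. apply is_lim_seq_const. apply lim_scal. exact Hi.
    apply lim_scal. exact Hi.
Qed.

Lemma pow_lt_base (a b : R) h : 0 <= a < b -> (1 <= h)%nat -> a ^ h < b ^ h.
Proof.
  intros Hab Hh. induction h as [|h IH]; [lia|].
  destruct h as [|h]. { simpl. lra. }
  assert (IH' : a ^ S h < b ^ S h) by (apply IH; lia).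
  assert (0 <= a ^ S h) by (apply pow_le; lra).
  assert (0 < b ^ S h) by (apply pow_lt; lra).
  change (a * a ^ S h < b * b ^ S h). nra.
Qed.

Lemma stolz_pow (x : nat -> R) (h : nat) (a : R) : (1 <= h)%nat ->
  is_lim_seq (fun n => (x (S n) - x n) * INR n / INR n ^ h) (INR h * a) ->
  is_lim_seq (fun n => x n / INR n ^ h) a.
Proof.
  intros Hh HD. apply stolz.
  - intros n. apply pow_lt_base; auto. split. apply pos_INR. rewrite S_INR; lra.
  - apply (is_lim_seq_le_p_loc INR). 2: apply is_lim_seq_INR.
    apply ev1. intros n Hn. destruct h as [|h]; [lia|].
    assert (1 <= INR n) by (replace 1 with (INR 1) by reflexivity; apply le_INR; lia).
    assert (1 <= INR n ^ h) by (apply pow_R1_Rle; lra).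
    simpl. nra.
  - assert (Hh0 : INR h <> 0) by (apply not_0_INR; lia).
    replace (Finite a) with (Finite (INR h * a / INR h)) by (f_equal; field; auto).
    apply (is_lim_seq_ext_loc (fun n => ((x (S n) - x n) * INR n / INR n ^ h) /
                                        ((INR (S n) ^ h - INR n ^ h) * INR n / INR n ^ h))).
    + apply ev1. intros n Hn. pose proof (INR_pos1 n Hn).
      assert (INR n ^ h < INR (S n) ^ h) by (apply pow_lt_base; auto; rewrite S_INR; lra).
      field. repeat split; try lra. apply pow_nonzero; lra.
    + apply is_lim_seq_div'; auto. apply lim_dpow; auto.
Qed.

Lemma lim_pow (u : nat -> R) (l : R) j : is_lim_seq u l -> is_lim_seq (fun n => u n ^ j) (l ^ j).
Proof.
  intros H. induction j as [|j IH]; simpl.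
  - apply is_lim_seq_const.
  - apply is_lim_seq_mult'; auto.
Qed.

Lemma lim_ratio j : is_lim_seq (fun n => (INR n / INR (S n)) ^ j) 1.
Proof.
  replace 1 with (1 ^ j) by apply pow1. apply lim_pow.
  apply (is_lim_seq_ext (fun n => 1 - / INR (S n))).
  - intros n. rewrite S_INR. pose proof (pos_INR n). field. lra.
  - replace (Finite 1) with (Finite (1 - 0)) by (f_equal; ring).
    apply is_lim_seq_minus'. apply is_lim_seq_const.
    apply (is_lim_seq_incr_1 (fun n => / INR n)). apply lim_inv_n.
Qed.

Lemma lim_rr2 : is_lim_seq (fun n => (rr (S n) - 1/4) * INR n * INR n) (-3/16).
Proof.
  apply (is_lim_seq_ext_loc (fun n => -3 / (16 - 4 * (/ INR n) ^ 2))).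
  - apply ev1. intros n Hn. pose proof (INR_pos1 n Hn). rewrite rr_eq.
    assert (1 <= INR n) by (replace 1 with (INR 1) by reflexivity; apply le_INR; lia).
    field. split; [nra|]. lra.
  - apply is_lim_seq_div'. apply is_lim_seq_const.
    replace (Finite 16) with (Finite (16 - 4 * 0 ^ 2)) by (f_equal; ring).
    apply is_lim_seq_minus'. apply is_lim_seq_const. apply lim_scal. apply lim_pow. apply lim_inv_n.
    lra.
Qed.

Definition hh (k : nat) : nat := Nat.div k 2.
Definition aa (k : nat) : R :=
  INR (fact k) / (2 ^ (Nat.div (k + 1) 2) * INR (fact (Nat.div k 2)) * 4 ^ k).

Definition Lim1 (k i : nat) : R :=
  if Nat.leb (S (hh i)) (hh k) then ee (k - i) * (aa i * (if Nat.eqb (S (hh i)) (hh k) then 1 else 0)) else 0.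

Definition ell (k i : nat) : R :=
  Binomial.C k i * (Lim1 k i + 0 * dd (k - i) * aa i +
    (-1/4) ^ (k - i) * (INR (hh i) * aa i * (if Nat.eqb (hh i) (hh k) then 1 else 0))).

Lemma div2_form q j : Nat.div (2 * q + j) 2 = (q + Nat.div j 2)%nat.
Proof. replace (2 * q + j)%nat with (q * 2 + j)%nat by lia. apply Nat.div_add_l. lia. Qed.

Lemma ee1 : ee 1 = 0. Proof. unfold ee, dd. simpl. field. Qed.
Lemma ee2 : ee 2 = 1/16. Proof. unfold ee, dd. simpl. field. Qed.
Lemma ee3 : ee 3 = 3/64. Proof. unfold ee, dd. simpl. field. Qed.

Lemma fact_plus1 n : INR (fact (S n)) = (INR n + 1) * INR (fact n).
Proof. change (fact (S n)) with (S n * fact n)%nat. rewrite mult_INR, S_INR. ring. Qed.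

Lemma Cform n i : (i <= n)%nat -> Binomial.C n i = INR (fact n) / (INR (fact i) * INR (fact (n - i))).
Proof. reflexivity. Qed.

Lemma ell_zero k q i : hh k = S q -> (i < 2 * q)%nat -> ell k i = 0.
Proof.
  intros Hk Hi. unfold ell, Lim1. rewrite Hk.
  assert (Hq : (hh i < q)%nat).
  { unfold hh. apply Nat.Div0.div_lt_upper_bound. lia. }
  destruct (Nat.eqb_spec (S (hh i)) (S q)); [lia|].
  destruct (Nat.eqb_spec (hh i) (S q)); [lia|].
  destruct (Nat.leb (S (hh i)) (S q)); ring.
Qed.


Section Forms.
Variable q : nat.
Let F := INR (fact (2 * q)).
Let G := INR (fact q).
Let Q := INR q.

Lemma F_pos : 0 < F. Proof. apply lt_0_INR, lt_O_fact. Qed.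
Lemma G_pos : 0 < G. Proof. apply lt_0_INR, lt_O_fact. Qed.
Lemma Q_pos : 0 <= Q. Proof. apply pos_INR. Qed.
Lemma S2q : INR (S (2 * q)) = 2 * Q + 1.
Proof. rewrite S_INR, mult_INR. reflexivity. Qed.
Lemma SS2q : INR (S (S (2 * q))) = 2 * Q + 2.
Proof. rewrite S_INR, S2q. ring. Qed.

Lemma fact1 : INR (fact (S (2 * q))) = (2 * Q + 1) * F.
Proof. rewrite fact_plus1, mult_INR. reflexivity. Qed.
Lemma fact2 : INR (fact (S (S (2 * q)))) = (2 * Q + 2) * (2 * Q + 1) * F.
Proof. rewrite fact_plus1, fact1, S2q. ring. Qed.
Lemma fact3 : INR (fact (2 * q + 3)) = (2 * Q + 3) * (2 * Q + 2) * (2 * Q + 1) * F.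
Proof. replace (2 * q + 3)%nat with (S (S (S (2 * q)))) by lia. rewrite fact_plus1, fact2, SS2q. ring. Qed.
Lemma factq1 : INR (fact (S q)) = (Q + 1) * G.
Proof. apply fact_plus1. Qed.

Lemma aa0 : aa (2 * q) = F / (2 ^ q * G * 4 ^ (2 * q)).
Proof.
  unfold aa. replace (Nat.div (2 * q + 1) 2) with q by (rewrite div2_form; simpl; lia).
  replace (Nat.div (2 * q) 2) with q by (rewrite <- (Nat.add_0_r (2 * q)), div2_form; simpl; lia).
  reflexivity.
Qed.

Lemma aa1 : aa (S (2 * q)) = (2 * Q + 1) * F / (2 * 2 ^ q * G * (4 * 4 ^ (2 * q))).
Proof.
  unfold aa. replace (Nat.div (S (2 * q) + 1) 2) with (S q) by (replace (S (2 * q) + 1)%nat with (2 * q + 2)%nat by lia; rewrite div2_form; simpl; lia).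
  replace (Nat.div (S (2 * q)) 2) with q by (replace (S (2 * q)) with (2 * q + 1)%nat by lia; rewrite div2_form; simpl; lia).
  rewrite fact1. simpl pow. reflexivity.
Qed.

Lemma aa2 : aa (S (S (2 * q))) = (2 * Q + 2) * (2 * Q + 1) * F / (2 * 2 ^ q * ((Q + 1) * G) * (16 * 4 ^ (2 * q))).
Proof.
  unfold aa. replace (Nat.div (S (S (2 * q)) + 1) 2) with (S q) by (replace (S (S (2 * q)) + 1)%nat with (2 * q + 3)%nat by lia; rewrite div2_form; simpl; lia).
  replace (Nat.div (S (S (2 * q))) 2) with (S q) by (replace (S (S (2 * q))) with (2 * q + 2)%nat by lia; rewrite div2_form; simpl; lia).
  rewrite fact2, factq1. simpl pow. f_equal. f_equal. ring.
Qed.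

Lemma aa3 : aa (2 * q + 3) = (2 * Q + 3) * (2 * Q + 2) * (2 * Q + 1) * F / (4 * 2 ^ q * ((Q + 1) * G) * (64 * 4 ^ (2 * q))).
Proof.
  unfold aa. replace (Nat.div (2 * q + 3 + 1) 2) with (S (S q)) by (replace (2 * q + 3 + 1)%nat with (2 * q + 4)%nat by lia; rewrite div2_form; simpl; lia).
  replace (Nat.div (2 * q + 3) 2) with (S q) by (rewrite div2_form; simpl; lia).
  rewrite fact3, factq1. replace (2 * q + 3)%nat with (3 + 2 * q)%nat by lia. rewrite pow_add.
  simpl pow. f_equal. ring.
Qed.

Lemma Cgen n i : (i <= n)%nat -> Binomial.C n i = INR (fact n) / (INR (fact i) * INR (fact (n - i))).
Proof. reflexivity. Qed.

Lemma C30 : Binomial.C (2 * q + 3) (2 * q) = (2 * Q + 3) * (2 * Q + 2) * (2 * Q + 1) / 6.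
Proof.
  unfold Binomial.C. replace (2 * q + 3 - 2 * q)%nat with 3%nat by lia. rewrite fact3.
  simpl (INR (fact 3)). pose proof F_pos. fold F. field. lra.
Qed.
Lemma C31 : Binomial.C (2 * q + 3) (S (2 * q)) = (2 * Q + 3) * (2 * Q + 2) / 2.
Proof.
  unfold Binomial.C. replace (2 * q + 3 - S (2 * q))%nat with 2%nat by lia. rewrite fact3, fact1.
  simpl (INR (fact 2)). pose proof F_pos. pose proof Q_pos. fold F. field. lra.
Qed.
Lemma C32 : Binomial.C (2 * q + 3) (S (S (2 * q))) = 2 * Q + 3.
Proof.
  unfold Binomial.C. replace (2 * q + 3 - S (S (2 * q)))%nat with 1%nat by lia. rewrite fact3, fact2.
  simpl (INR (fact 1)). pose proof F_pos. pose proof Q_pos. fold F. field. lra.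
Qed.
Lemma C20 : Binomial.C (S (S (2 * q))) (2 * q) = (2 * Q + 2) * (2 * Q + 1) / 2.
Proof.
  unfold Binomial.C. replace (S (S (2 * q)) - 2 * q)%nat with 2%nat by lia. rewrite fact2.
  simpl (INR (fact 2)). pose proof F_pos. fold F. field. lra.
Qed.
Lemma C21 : Binomial.C (S (S (2 * q))) (S (2 * q)) = 2 * Q + 2.
Proof.
  unfold Binomial.C. replace (S (S (2 * q)) - S (2 * q))%nat with 1%nat by lia. rewrite fact2, fact1.
  simpl (INR (fact 1)). pose proof F_pos. pose proof Q_pos. fold F. field. lra.
Qed.
End Forms.

Lemma ident k' : (1 <= k')%nat ->
  sum_f_R0 (ell (S k')) k' = INR (hh (S k')) * aa (S k').
Proof.
  intros Hk. destruct (Nat.Even_or_Odd k') as [[q Hq]|[q Hq]].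
  -
    destruct q as [|q]; [lia|].
    assert (Hk2 : S k' = (2 * q + 3)%nat) by lia. rewrite Hk2.
    replace k' with (2 * q + 2)%nat by lia.
    assert (Hh : hh (2 * q + 3) = S q) by (unfold hh; rewrite div2_form; simpl; lia).
    replace (2 * q + 2)%nat with (S (S (2 * q))) by lia.
    rewrite !tech5. rewrite (sum_last_only _ (2 * q)) by (intros i Hi; apply (ell_zero _ q); auto).
    unfold ell, Lim1. rewrite Hh.
    replace (hh (2 * q)) with q by (unfold hh; rewrite <- (Nat.add_0_r (2 * q)), div2_form; simpl; lia).
    replace (hh (S (2 * q))) with q by (unfold hh; replace (S (2 * q)) with (2 * q + 1)%nat by lia; rewrite div2_form; simpl; lia).
    replace (hh (S (S (2 * q)))) with (S q) by (unfold hh; replace (S (S (2 * q))) with (2 * q + 2)%nat by lia; rewrite div2_form; simpl; lia).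
    replace (2 * q + 3 - 2 * q)%nat with 3%nat by lia.
    replace (2 * q + 3 - S (2 * q))%nat with 2%nat by lia.
    replace (2 * q + 3 - S (S (2 * q)))%nat with 1%nat by lia.
    rewrite Nat.leb_refl, Nat.eqb_refl.
    replace (Nat.leb (S (S q)) (S q)) with false by (symmetry; apply Nat.leb_gt; lia).
    replace (Nat.eqb q (S q)) with false by (symmetry; apply Nat.eqb_neq; lia).
    rewrite ee2, ee3.
    rewrite C30, C31, C32, aa0, aa1, aa2, aa3, S_INR.
    pose proof (F_pos q). pose proof (G_pos q). pose proof (Q_pos q).
    assert (0 < 2 ^ q) by (apply pow_lt; lra). assert (0 < 4 ^ (2 * q)) by (apply pow_lt; lra).
    field. repeat split; lra.
  -
    assert (Hk2 : S k' = S (S (2 * q))) by lia. rewrite Hk2.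
    replace k' with (S (2 * q)) by lia.
    assert (Hh : hh (S (S (2 * q))) = S q) by (unfold hh; replace (S (S (2 * q))) with (2 * q + 2)%nat by lia; rewrite div2_form; simpl; lia).
    rewrite !tech5. rewrite (sum_last_only _ (2 * q)) by (intros i Hi; apply (ell_zero _ q); auto).
    unfold ell, Lim1. rewrite Hh.
    replace (hh (2 * q)) with q by (unfold hh; rewrite <- (Nat.add_0_r (2 * q)), div2_form; simpl; lia).
    replace (hh (S (2 * q))) with q by (unfold hh; replace (S (2 * q)) with (2 * q + 1)%nat by lia; rewrite div2_form; simpl; lia).
    replace (S (S (2 * q)) - 2 * q)%nat with 2%nat by lia.
    replace (S (S (2 * q)) - S (2 * q))%nat with 1%nat by lia.
    rewrite Nat.leb_refl, Nat.eqb_refl.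
    replace (Nat.eqb q (S q)) with false by (symmetry; apply Nat.eqb_neq; lia).
    rewrite ee1, ee2.
    rewrite C20, C21, aa0, aa2, S_INR.
    pose proof (F_pos q). pose proof (G_pos q). pose proof (Q_pos q).
    assert (0 < 2 ^ q) by (apply pow_lt; lra). assert (0 < 4 ^ (2 * q)) by (apply pow_lt; lra).
    field. repeat split; lra.
Qed.

Lemma Rpow_div (a b : R) j : b <> 0 -> (a / b) ^ j = a ^ j / b ^ j.
Proof. intros H. induction j; simpl. field. rewrite IHj. field. split; auto. apply pow_nonzero; auto. Qed.

Lemma hh_eq i k : (i < k)%nat -> hh i = hh k -> k = S i.
Proof.
  unfold hh. intros H1 H2.
  pose proof (Nat.div_mod_eq i 2). pose proof (Nat.div_mod_eq k 2).
  pose proof (Nat.mod_upper_bound i 2 ltac:(lia)). pose proof (Nat.mod_upper_bound k 2 ltac:(lia)).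
  lia.
Qed.

Lemma hh_le i k : (i <= k)%nat -> (hh i <= hh k)%nat.
Proof. intros; unfold hh; apply Nat.Div0.div_le_mono; auto. Qed.

Lemma lim_X1rr p q : (p <= q)%nat ->
  is_lim_seq (fun n => (rr (S n) - 1/4) * (INR n ^ S p / INR n ^ q)) 0.
Proof.
  intros H.
  apply (is_lim_seq_ext_loc (fun n => ((rr (S n) - 1/4) * INR n * INR n) * (INR n ^ p / INR n ^ q) * / INR n)).
  - apply ev1. intros n Hn. pose proof (INR_pos1 n Hn). simpl pow. field.
    split; [apply pow_nonzero|]; lra.
  - replace (Finite 0) with (Finite (-3/16 * (if Nat.eqb p q then 1 else 0) * 0)) by (f_equal; ring).
    apply is_lim_seq_mult'. apply is_lim_seq_mult'. apply lim_rr2. apply powratio; auto. apply lim_inv_n.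
Qed.

Definition Claim (k : nat) : Prop :=
  is_lim_seq (fun n => mu n k / INR n ^ hh k) (aa k) /\
  is_lim_seq (fun n => D n k * INR n / INR n ^ hh k) (INR (hh k) * aa k).

Lemma step k' : (1 <= k')%nat -> (forall i, (i <= k')%nat -> Claim i) ->
  is_lim_seq (fun n => D n (S k') * INR n / INR n ^ hh (S k')) (INR (hh (S k')) * aa (S k')).
Proof.
  intros Hk IH. set (k := S k'). set (h := hh k).
  assert (Hh : (1 <= h)%nat) by (unfold h, hh, k; apply (Nat.div_le_lower_bound); lia).
  replace (INR h * aa k) with (sum_f_R0 (ell k) k') by (unfold h, k; apply ident; auto).
  apply is_lim_seq_incr_1.
  destruct h as [|h0] eqn:Eh; [lia|].
  apply (is_lim_seq_ext_loc (fun n => (D (S n) k * INR n / INR n ^ S h0) * (INR n / INR (S n)) ^ h0)).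
  { apply ev1. intros n Hn. pose proof (INR_pos1 n Hn).
    assert (INR (S n) <> 0) by (rewrite S_INR; lra).
    rewrite Rpow_div by auto.
    rewrite S_INR. simpl pow. field. repeat split; try apply pow_nonzero; lra. }
  replace (Finite (sum_f_R0 (ell k) k')) with (Finite (sum_f_R0 (ell k) k' * 1)) by (f_equal; ring).
  apply is_lim_seq_mult'; [|apply lim_ratio].
  set (T := fun i n => Binomial.C k i *
     (ee (k - i) * (mu n i / INR n ^ hh i * (INR n ^ S (hh i) / INR n ^ S h0)) +
      ((rr (S n) - 1/4) * (INR n ^ S (hh i) / INR n ^ S h0)) * dd (k - i) * (mu n i / INR n ^ hh i) +
      (-1/4) ^ (k - i) * ((D n i * INR n / INR n ^ hh i) * (INR n ^ hh i / INR n ^ S h0)))).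
  apply (is_lim_seq_ext_loc (fun n => sum_f_R0 (fun i => T i n) k')).
  { apply ev1. intros n Hn. pose proof (INR_pos1 n Hn). unfold k. rewrite Dform by auto.
    unfold Rdiv at 1. rewrite Rmult_assoc, Rmult_comm, scal_sum. apply sum_eq. intros i _.
    unfold T. fold k. simpl pow.
    assert (INR n ^ hh i <> 0) by (apply pow_nonzero; lra).
    assert (INR n ^ h0 <> 0) by (apply pow_nonzero; lra).
    field. repeat split; lra. }
  apply lim_sum. intros i Hi. destruct (IH i Hi) as [HA HB].
  assert (Hle : (hh i <= S h0)%nat) by (rewrite <- Eh; apply hh_le; unfold k; lia).
  unfold T, ell. apply lim_scal.
  apply is_lim_seq_plus'; [apply is_lim_seq_plus'|].
  - unfold Lim1. fold h. rewrite Eh.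
    destruct (Nat.leb_spec (S (hh i)) (S h0)) as [Hl|Hl].
    + apply lim_scal. apply is_lim_seq_mult'; auto. apply powratio; auto.
    + assert (E1 : k = S i) by (apply hh_eq; [unfold k; lia|]; fold h; lia).
      replace (k - i)%nat with 1%nat by lia. rewrite ee1.
      eapply is_lim_seq_ext; [|apply is_lim_seq_const]. intros n; simpl; ring.
  - apply is_lim_seq_mult'; auto. apply is_lim_seq_mult'. apply lim_X1rr; auto. apply is_lim_seq_const.
  - apply lim_scal. fold h. rewrite Eh. apply is_lim_seq_mult'; auto. apply powratio; auto.
Qed.

Lemma claim0 : Claim 0.
Proof.
  unfold Claim. replace (hh 0) with 0%nat by reflexivity.
  replace (aa 0) with 1 by (unfold aa; simpl; field).
  split.
  - apply (is_lim_seq_ext_loc (fun _ => 1)); [|apply is_lim_seq_const].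
    apply ev1. intros n Hn. rewrite mu0 by auto. simpl. field.
  - apply (is_lim_seq_ext_loc (fun _ => 0)).
    + apply ev1. intros n Hn. unfold D. rewrite !mu0 by lia. simpl. field.
    + replace (Finite (INR 0 * 1)) with (Finite 0) by (f_equal; simpl; ring). apply is_lim_seq_const.
Qed.

Lemma lim_lin (c d : R) : c <> 0 -> is_lim_seq (fun n => / (c - d * / INR n)) (/ c).
Proof.
  intros Hc. apply (is_lim_seq_ext (fun n => 1 / (c - d * / INR n))).
  { intros n. unfold Rdiv. rewrite Rmult_1_l. reflexivity. }
  replace (Finite (/ c)) with (Finite (1 / (c - d * 0))) by (f_equal; field; auto).
  apply is_lim_seq_div'. apply is_lim_seq_const.
  apply is_lim_seq_minus'. apply is_lim_seq_const. apply lim_scal. apply lim_inv_n.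
  replace (c - d * 0) with c by ring. auto.
Qed.

Lemma claim1 : Claim 1.
Proof.
  unfold Claim. replace (hh 1) with 0%nat by reflexivity.
  replace (aa 1) with (1/8) by (unfold aa; simpl; field).
  split.
  - apply (is_lim_seq_ext_loc (fun n => / 8 * / (1 - 3/2 * / INR n))).
    + exists 2%nat. intros n Hn. rewrite mu1 by auto.
      assert (2 <= INR n) by (replace 2 with (INR 2) by (simpl; ring); apply le_INR; lia).
      simpl. field. repeat split; lra.
    + replace (Finite (1/8)) with (Finite (/8 * /1)) by (f_equal; field).
      apply lim_scal. apply lim_lin. lra.
  - apply (is_lim_seq_ext_loc (fun n => (-3/16) * / INR n * (/ (1 - 1/2 * / INR n)) * (/ (1 - 3/2 * / INR n)))).
    + exists 2%nat. intros n Hn. unfold D. rewrite !mu1 by lia. rewrite S_INR.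
      assert (2 <= INR n) by (replace 2 with (INR 2) by (simpl; ring); apply le_INR; lia).
      simpl. field. repeat split; lra.
    + replace (Finite (INR 0 * (1/8))) with (Finite (-3/16 * 0 * /1 * /1)) by (f_equal; simpl; field).
      apply is_lim_seq_mult'. apply is_lim_seq_mult'. apply lim_scal. apply lim_inv_n.
      apply lim_lin; lra. apply lim_lin; lra.
Qed.

Lemma claim_all k : Claim k.
Proof.
  induction k as [k IH] using (well_founded_induction lt_wf).
  destruct k as [|[|k']].
  - apply claim0.
  - apply claim1.
  - assert (HB : is_lim_seq (fun n => D n (S (S k')) * INR n / INR n ^ hh (S (S k')))
                            (INR (hh (S (S k'))) * aa (S (S k')))).
    { apply step. lia. intros i Hi. apply IH. lia. }
    split; auto.
    apply stolz_pow. unfold hh. apply Nat.div_le_lower_bound; lia.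
    exact HB.
Qed.

Theorem lemma3 (k : nat) :
  asymp_equiv
    (fun n => expect n (fun t => (INR (S2 t) - INR n / 4) ^ k))
    (fun n => INR (fact k)
              / (2 ^ (Nat.div (k + 1) 2) * INR (fact (Nat.div k 2)) * 4 ^ k)
              * INR n ^ (Nat.div k 2)).
Proof.
  destruct (claim_all k) as [HA _].
  unfold asymp_equiv.
  change (fun n => expect n (fun t => (INR (S2 t) - INR n / 4) ^ k)) with (fun n => mu n k).
  change (INR (fact k) / (2 ^ (Nat.div (k + 1) 2) * INR (fact (Nat.div k 2)) * 4 ^ k)) with (aa k).
  assert (Ha : 0 < aa k).
  { unfold aa. apply Rdiv_lt_0_compat. apply lt_0_INR, lt_O_fact.
    apply Rmult_lt_0_compat. apply Rmult_lt_0_compat. apply pow_lt; lra. apply lt_0_INR, lt_O_fact.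
    apply pow_lt; lra. }
  apply (is_lim_seq_ext_loc (fun n => (mu n k / INR n ^ hh k) / aa k)).
  - apply ev1. intros n Hn. pose proof (INR_pos1 n Hn). unfold hh.
    change (expect n (fun t : tree => (INR (S2 t) - INR n / 4) ^ k)) with (mu n k).
    field. split; [apply pow_nonzero|]; lra.
  - replace (Finite 1) with (Finite (aa k / aa k)) by (f_equal; field; lra).
    apply is_lim_seq_div'; auto. apply is_lim_seq_const. lra.
Qed.
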